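(* The map $(m,n)\mapsto d_{m,n}$ is a metric on $\overline{\mathbb{N}}=\mathbb{N}\cup\{-1\}$.
   Context: Let $\mathbb{N}=\{0,1,2,\dots\}$. Fix a sequence $(\pi^n)_{n\in\mathbb{N}}$ where each $\pi^n=(\pi^n_i)_{i\in\mathbb{N}}$ is a probability distribution on $\mathbb{N}$ with support contained in $\{0,\dots,n\}$, and $\pi^n\ne\pi^m$ for $m\ne n$. Define reals $d_{m,n}$ for $m,n\in\mathbb{N}\cup\{-1\}$ recursively as follows: $d_{-1,-1}=0$, $d_{-1,j}=d_{j,-1}=1$ for $j\in\mathbb{N}$, and for $m,n\in\mathbb{N}$, $$d_{m,n}=\min_{z\in\mathcal{F}_{m,n}}\sum_{i=0}^m\sum_{j=0}^n z_{i,j}\,d_{i-1,j-1},$$ where $\mathcal{F}_{m,n}$ is the set of transport plans from $\pi^m$ to $\pi^n$, i.e. arrays $z=(z_{i,j})_{0\le i\le m,\,0\le j\le n}$ with $z_{i,j}\ge0$, $\sum_{j=0}^n z_{i,j}=\pi^m_i$ for all $i\le m$, and $\sum_{i=0}^m z_{i,j}=\pi^n_j$ for all $j\le n$. *)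

(* Defs.v *)
From HB Require Import structures.
From mathcomp Require Import all_boot all_order all_algebra.
From mathcomp Require Import boolp classical_sets reals.
Set Implicit Arguments. Unset Strict Implicit. Unset Printing Implicit Defensive.
Import Order.TTheory GRing.Theory Num.Theory.
Local Open Scope ring_scope.
Local Open Scope classical_set_scope.

Definition is_prob_seq (R : realType) (pi : nat -> nat -> R) : Prop :=
  (forall n i, 0 <= pi n i) /\
  (forall n i, (n < i)%N -> pi n i = 0) /\
  (forall n, \sum_(i < n.+1) pi n i = 1) /\
  (forall m n, m <> n -> pi m <> pi n).

Definition transport_plan (R : realType) (pi : nat -> nat -> R) (m n : nat)
    (z : 'M[R]_(m.+1, n.+1)) : Prop :=
  (forall i j, 0 <= z i j) /\
  (forall i : 'I_m.+1, \sum_(j < n.+1) z i j = pi m i) /\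
  (forall j : 'I_n.+1, \sum_(i < m.+1) z i j = pi n j).

(* Shifted indices: [dfuel pi k a b] computes d_{a-1,b-1} given enough fuel k
   (k > a + b suffices).  The minimum over the (nonempty, compact) set of
   transport plans is written as an infimum; it is attained. *)
Fixpoint dfuel (R : realType) (pi : nat -> nat -> R) (k : nat) : nat -> nat -> R :=
  match k with
  | 0 => fun _ _ => 0
  | k'.+1 => fun a b =>
      match a, b with
      | 0, 0 => 0
      | 0, _.+1 => 1
      | _.+1, 0 => 1
      | m.+1, n.+1 =>
          inf [set c | exists z : 'M[R]_(m.+1, n.+1),
                 @transport_plan R pi m n z /\
                 c = \sum_(i < m.+1) \sum_(j < n.+1) z i j * dfuel pi k' i j]
      end
  end.

Definition dist (R : realType) (pi : nat -> nat -> R) (x y : int) : R :=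
  let a := absz (x + 1) in let b := absz (y + 1) in
  dfuel pi (a + b).+1 a b.

(* Main.v *)
Require Import Defs.
From HB Require Import structures.
From mathcomp Require Import all_boot all_order all_algebra.
From mathcomp Require Import boolp classical_sets reals.
From mathcomp Require Import zify ring lra.
Import Order.TTheory GRing.Theory Num.Theory.
Local Open Scope ring_scope.
Local Open Scope classical_set_scope.

Set Implicit Arguments. Unset Strict Implicit.
Section S.
Variable R : realType.
Variable pi : nat -> nat -> R.

Lemma dfuel_irr k k' a b : (a + b < k)%N -> (a + b < k')%N ->
  dfuel pi k a b = dfuel pi k' a b.
Proof.
elim: k k' a b => [|k IH] [|k'] a b //= Hk Hk'.
case: a Hk Hk' => [|m]; case: b => [|n] // Hk Hk'.
congr (inf _); apply/seteqP; split => c [z [Hz ->]]; exists z; split => //;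
  apply: eq_bigr => i _; apply: eq_bigr => j _; rewrite (IH k') //.
- have := ltn_ord i; have := ltn_ord j; rewrite !addSn addnS in Hk Hk'; lia.
- have := ltn_ord i; have := ltn_ord j; rewrite !addSn addnS in Hk Hk'; lia.
- have := ltn_ord i; have := ltn_ord j; rewrite !addSn addnS in Hk Hk'; lia.
- have := ltn_ord i; have := ltn_ord j; rewrite !addSn addnS in Hk Hk'; lia.
Qed.

Definition D a b := dfuel pi (a + b).+1 a b.

Definition cost m n (z : 'M[R]_(m.+1, n.+1)) :=
  \sum_(i < m.+1) \sum_(j < n.+1) z i j * D i j.

Definition S m n := [set c | exists z : 'M[R]_(m.+1, n.+1),
  transport_plan pi z /\ c = cost z].

Lemma dfuel_SS k m n : dfuel pi k.+1 m.+1 n.+1 =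
  inf [set c | exists z : 'M[R]_(m.+1, n.+1), transport_plan pi z /\
       c = \sum_(i < m.+1) \sum_(j < n.+1) z i j * dfuel pi k i j].
Proof. by []. Qed.

Lemma D_eq m n : D m.+1 n.+1 = inf (S m n).
Proof.
rewrite /D dfuel_SS; congr (inf _); apply/seteqP; split => c [z [Hz ->]]; exists z;
  split => //; apply: eq_bigr => i _; apply: eq_bigr => j _;
  rewrite /D; congr (_ * _); apply: dfuel_irr;
  have := ltn_ord i; have := ltn_ord j; lia.
Qed.

Lemma D00 : D 0 0 = 0. Proof. by []. Qed.
Lemma D0S n : D 0 n.+1 = 1. Proof. by []. Qed.
Lemma DS0 n : D n.+1 0 = 1. Proof. by []. Qed.

Hypothesis Hpi : is_prob_seq pi.

Definition prodplan m n : 'M[R]_(m.+1, n.+1) := \matrix_(i, j) (pi m i * pi n j).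

Lemma prodplanP m n : transport_plan pi (prodplan m n).
Proof.
case: Hpi => [H0 [Hz [H1 _]]].
split; [|split].
- by move=> i j; rewrite mxE mulr_ge0.
- move=> i; under eq_bigr do rewrite mxE.
  by rewrite -mulr_sumr H1 mulr1.
- move=> j; under eq_bigr do rewrite mxE.
  by rewrite -mulr_suml H1 mul1r.
Qed.

Lemma S_neq0 m n : S m n !=set0.
Proof. by exists (cost (prodplan m n)), (prodplan m n); split => //; apply: prodplanP. Qed.

Lemma D_bounds N a b : (a + b < N)%N -> 0 <= D a b <= 1.
Proof.
elim: N a b => [|N IH] a b // Hab.
case: a Hab => [|m]; case: b => [|n] Hab; rewrite ?D00 ?D0S ?DS0 ?lexx ?ler01 //.
have HI : forall (i : 'I_m.+1) (j : 'I_n.+1), 0 <= D i j <= 1.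
  by move=> i j; apply: IH; have := ltn_ord i; have := ltn_ord j; lia.
have Hc : forall z : 'M[R]_(m.+1, n.+1), transport_plan pi z -> 0 <= cost z <= 1.
  move=> z [Hz0 [Hr Hcl]].
  apply/andP; split.
  - apply: sumr_ge0 => i _; apply: sumr_ge0 => j _.
    by apply: mulr_ge0 => //; case/andP: (HI i j).
  - apply: (@le_trans _ _ (\sum_(i < m.+1) \sum_(j < n.+1) z i j)).
    + apply: ler_sum => i _; apply: ler_sum => j _.
      rewrite -[X in _ <= X]mulr1; apply: ler_wpM2l => //.
      by case/andP: (HI i j).
    + under eq_bigr do rewrite Hr.
      by case: Hpi => [_ [_ [H1 _]]]; rewrite H1.
rewrite D_eq; apply/andP; split.
- apply: lb_le_inf; first exact: S_neq0.
  by move=> c [z [Hz ->]]; case/andP: (Hc z Hz).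
- have [c Sc] := S_neq0 m n.
  apply: (le_trans (ge_inf _ Sc)).
  + by exists 0 => y [z [Hz ->]]; case/andP: (Hc z Hz).
  + by case: Sc => z [Hz ->]; case/andP: (Hc z Hz).
Qed.

Lemma D_ge0 a b : 0 <= D a b.
Proof. by case/andP: (@D_bounds (a + b).+1 a b (ltnSn _)). Qed.
Lemma D_le1 a b : D a b <= 1.
Proof. by case/andP: (@D_bounds (a + b).+1 a b (ltnSn _)). Qed.

Lemma cost_ge0 m n (z : 'M[R]_(m.+1, n.+1)) : transport_plan pi z -> 0 <= cost z.
Proof.
move=> [Hz0 _]; apply: sumr_ge0 => i _; apply: sumr_ge0 => j _.
by apply: mulr_ge0 => //; apply: D_ge0.
Qed.

Lemma S_lb m n : has_lbound (S m n).
Proof. by exists 0 => y [z [Hz ->]]; apply: cost_ge0. Qed.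

Lemma D_le_cost m n (z : 'M[R]_(m.+1, n.+1)) : transport_plan pi z -> D m.+1 n.+1 <= cost z.
Proof. by move=> Hz; rewrite D_eq; apply: ge_inf; [apply: S_lb| exists z]. Qed.

Lemma D_ge_lb m n x : (forall z : 'M[R]_(m.+1, n.+1), transport_plan pi z -> x <= cost z) ->
  x <= D m.+1 n.+1.
Proof.
by move=> H; rewrite D_eq; apply: lb_le_inf; [apply: S_neq0| move=> y [z [Hz ->]]; apply: H].
Qed.

Lemma sum_delta p (i0 : 'I_p) (F : 'I_p -> R) :
  \sum_(j < p) (F j *+ (j == i0)) = F i0.
Proof.
rewrite (bigD1 i0) //= eqxx mulr1n big1 ?addr0 // => j /negbTE ->.
by rewrite mulr0n.
Qed.

Definition diagplan m : 'M[R]_(m.+1, m.+1) := \matrix_(i, j) (pi m i *+ (i == j)).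

Lemma diagplanP m : transport_plan pi (diagplan m).
Proof.
case: Hpi => [H0 _].
split; [|split].
- by move=> i j; rewrite mxE mulrn_wge0.
- move=> i; under eq_bigr do rewrite mxE eq_sym.
  by rewrite (sum_delta i (fun _ => pi m i)).
- move=> j; under eq_bigr do rewrite mxE.
  by rewrite (sum_delta j (fun i : 'I_m.+1 => pi m i)).
Qed.

Lemma D_diag_ind N a : (a < N)%N -> D a a = 0.
Proof.
elim: N a => [//|N IH] [//|m] Ha.
apply/eqP; rewrite eq_le D_ge0 andbT.
apply: (le_trans (D_le_cost (diagplanP m))).
rewrite /cost big1 // => i _.
rewrite (eq_bigr (fun j : 'I_m.+1 => (pi m i * D i j) *+ (j == i))).
  rewrite (sum_delta i (fun j : 'I_m.+1 => pi m i * D i j)) IH ?mulr0 //.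
  by have := ltn_ord i; lia.
move=> j _; rewrite mxE eq_sym; case: eqP => [->|]; by rewrite ?mulr1n ?mulr0n ?mul0r.
Qed.

Lemma D_diag a : D a a = 0.
Proof. exact: (@D_diag_ind a.+1). Qed.

Lemma D_sym_ind N a b : (a + b < N)%N -> D a b = D b a.
Proof.
elim: N a b => [|N IH] a b // Hab.
case: a Hab => [|m]; case: b => [|n] Hab //.
have key : forall m' n', (m' + n' = m + n)%N -> forall z : 'M[R]_(m'.+1, n'.+1),
    transport_plan pi z -> transport_plan pi z^T /\ cost z^T = cost z.
  move=> m' n' Hmn z [H0 [Hr Hc]]; split.
  - split; [|split].
    + by move=> i j; rewrite mxE.
    + by move=> i; under eq_bigr do rewrite mxE.
    + by move=> j; under eq_bigr do rewrite mxE.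
  - rewrite /cost exchange_big /=; apply: eq_bigr => i _; apply: eq_bigr => j _.
    rewrite mxE IH //; have := ltn_ord i; have := ltn_ord j; lia.
rewrite !D_eq; congr (inf _); apply/seteqP; split => c [z [Hz ->]].
- have [Hz' Hc] := key m n erefl z Hz; exists z^T; split => //.
- have [Hz' Hc] := key n m (addnC _ _) z Hz; exists z^T; split => //.
Qed.

Lemma D_sym a b : D a b = D b a.
Proof. exact: (@D_sym_ind (a + b).+1). Qed.

Lemma min_pos p q (P : 'I_p -> 'I_q -> bool) (f : 'I_p -> 'I_q -> R) :
  (forall i j, P i j -> 0 < f i j) ->
  exists2 d, 0 < d & forall i j, P i j -> d <= f i j.
Proof.
move=> Hf.
exists (\big[Num.min/1]_(k : 'I_p * 'I_q | P k.1 k.2) f k.1 k.2).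
- elim/big_ind: _ => //; first by move=> x y; rewrite lt_min => -> ->.
  by move=> k /Hf.
- move=> i j Pij; rewrite (bigD1 (i, j)) //=.
  by rewrite ge_min lexx.
Qed.

Lemma pos_core m n d (i0 : nat) : 0 < d ->
  (forall (i : 'I_m.+1) (j : 'I_n.+1), (i : nat) != j -> d <= D i j) ->
  pi n i0 < pi m i0 -> d * (pi m i0 - pi n i0) <= D m.+1 n.+1.
Proof.
case: Hpi => [H0 [Hz _]] Hd Hdij Hlt.
have Hi0 : (i0 < m.+1)%N.
  rewrite ltnNge; apply/negP => Hm; move: Hlt; rewrite (Hz m i0) //.
  by rewrite ltNge H0.
pose I0 : 'I_m.+1 := Ordinal Hi0.
apply: D_ge_lb => z [Hz0 [Hr Hc]].
pose off := \sum_(j < n.+1) z I0 j *+ ((j : nat) != i0).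
have Hoff : pi m i0 - pi n i0 <= off.
  have -> : pi m i0 = \sum_(j < n.+1) z I0 j *+ ((j : nat) == i0) + off.
    rewrite -big_split /= -(Hr I0) /=; apply: eq_bigr => j _.
    by case: eqP => _; rewrite ?mulr1n ?mulr0n ?addr0 ?add0r.
  rewrite lerBlDr addrC lerD2l.
  case: (ltnP n i0) => Hn.
  - rewrite big1 // => j _; have := ltn_ord j => Hj.
    have -> : ((j : nat) == i0) = false by apply/negbTE; apply/eqP => E; lia.
    by rewrite mulr0n.
  - have Hj0 : (i0 < n.+1)%N by [].
    pose J0 : 'I_n.+1 := Ordinal Hj0.
    rewrite (eq_bigr (fun j => z I0 j *+ (j == J0))); last first.
      by move=> j _.
    rewrite (sum_delta J0 (fun j => z I0 j)) -[X in _ <= X](Hc J0) /=.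
    by rewrite (bigD1 I0) //= lerDl sumr_ge0.
apply: (le_trans (ler_wpM2l (ltW Hd) Hoff)).
rewrite /cost (bigD1 I0) //= -[X in X <= _]addr0; apply: lerD; last first.
  by apply: sumr_ge0 => i _; apply: sumr_ge0 => j _; rewrite mulr_ge0 ?D_ge0.
rewrite /off mulr_sumr; apply: ler_sum => j _.
case: eqP => [E|/eqP E]; first by rewrite mulr0n mulr0 mulr_ge0 ?D_ge0.
rewrite mulr1n mulrC ler_wpM2l //.
by apply: (Hdij I0 j); rewrite /= eq_sym.
Qed.

Lemma D_eq0_ind N a b : (a + b < N)%N -> D a b = 0 -> a = b.
Proof.
elim: N a b => [|N IH] a b // Hab.
case: a Hab => [|m]; case: b => [|n] Hab //; rewrite ?D0S ?DS0.
- by move=> /eqP; rewrite oner_eq0.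
- by move=> /eqP; rewrite oner_eq0.
move=> HD; case: (eqVneq m n) => [->//|Hmn]; exfalso.
have Hp : forall (i : 'I_m.+1) (j : 'I_n.+1), (i : nat) != j -> 0 < D i j.
  move=> i j Hij; rewrite lt_def D_ge0 andbT; apply/eqP => E.
  move/eqP: Hij; apply; apply: IH E; have := ltn_ord i; have := ltn_ord j; lia.
have [d Hd Hdij] := min_pos Hp.
have : pi m <> pi n by case: Hpi => [_ [_ [_ H]]]; apply: H; apply/eqP.
move=> Hne.
have [i0 Hi0] : exists i0, pi m i0 <> pi n i0.
  apply: contra_notP Hne => H; apply: funext => i; apply: contra_notP (H) => Hi.
  by exfalso; apply: H; exists i.
case: (ltgtP (pi n i0) (pi m i0)) => Hlt.
- have := pos_core Hd Hdij Hlt; rewrite HD => Hle.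
  have : 0 < d * (pi m i0 - pi n i0) by rewrite mulr_gt0 // subr_gt0.
  by rewrite ltNge Hle.
- have Hdij' : forall (i : 'I_n.+1) (j : 'I_m.+1), (i : nat) != j -> d <= D i j.
    by move=> i j Hij; rewrite D_sym; apply: Hdij; rewrite eq_sym.
  have := pos_core Hd Hdij' Hlt; rewrite D_sym HD => Hle.
  have : 0 < d * (pi n i0 - pi m i0) by rewrite mulr_gt0 // subr_gt0.
  by rewrite ltNge Hle.
- by apply: Hi0.
Qed.

Lemma D_eq0 a b : D a b = 0 -> a = b.
Proof. exact: (@D_eq0_ind (a + b).+1). Qed.

Lemma glue_cost m n p (z1 : 'M[R]_(m.+1, n.+1)) (z2 : 'M[R]_(n.+1, p.+1)) :
  transport_plan pi z1 -> transport_plan pi z2 ->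
  (forall (i : 'I_m.+1) (j : 'I_n.+1) (k : 'I_p.+1), D i k <= D i j + D j k) ->
  D m.+1 p.+1 <= cost z1 + cost z2.
Proof.
move=> [P1 [R1 C1]] [P2 [R2 C2]] Htri.
pose t (i : 'I_m.+1) (j : 'I_n.+1) (k : 'I_p.+1) := z1 i j * z2 j k / pi n j.
have t_ge0 : forall i j k, 0 <= t i j k.
  by move=> i j k; rewrite /t !mulr_ge0 // invr_ge0 -(C1 j) sumr_ge0.
have z1_le : forall i j, z1 i j <= pi n j.
  by move=> i j; rewrite -(C1 j) (bigD1 i) //= lerDl sumr_ge0.
have z2_le : forall j k, z2 j k <= pi n j.
  by move=> j k; rewrite -(R2 j) (bigD1 k) //= lerDl sumr_ge0.
have Rt1 : forall i j, \sum_k t i j k = z1 i j.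
  move=> i j; rewrite /t -mulr_suml -mulr_sumr R2.
  have [E|E] := eqVneq (pi n j) 0.
    have : z1 i j = 0 by apply/eqP; rewrite eq_le P1 andbT -E z1_le.
    by move=> ->; rewrite !mul0r.
  by rewrite mulfK.
have Rt2 : forall j k, \sum_i t i j k = z2 j k.
  move=> j k; rewrite /t -mulr_suml -mulr_suml C1.
  have [E|E] := eqVneq (pi n j) 0.
    have : z2 j k = 0 by apply/eqP; rewrite eq_le P2 andbT -E z2_le.
    by move=> ->; rewrite mulr0 mul0r.
  by rewrite mulrC mulrA mulVf // mul1r.
pose w : 'M[R]_(m.+1, p.+1) := \matrix_(i, k) \sum_j t i j k.
have Pw : transport_plan pi w.
  split; [|split].
  - by move=> i k; rewrite mxE sumr_ge0.
  - move=> i; under eq_bigr do rewrite mxE; rewrite exchange_big /=.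
    by under eq_bigr do rewrite Rt1; rewrite R1.
  - move=> k; under eq_bigr do rewrite mxE; rewrite exchange_big /=.
    by under eq_bigr do rewrite Rt2; rewrite C2.
apply: (le_trans (D_le_cost Pw)).
rewrite /cost.
apply: (@le_trans _ _ (\sum_(i < m.+1) \sum_(k < p.+1) \sum_(j < n.+1)
    (t i j k * D i j + t i j k * D j k))).
  apply: ler_sum => i _; apply: ler_sum => k _; rewrite mxE mulr_suml.
  by apply: ler_sum => j _; rewrite -mulrDr ler_wpM2l.
rewrite (eq_bigr (fun i => \sum_(k < p.+1) \sum_(j < n.+1) t i j k * D i j +
    \sum_(k < p.+1) \sum_(j < n.+1) t i j k * D j k)); last first.
  by move=> i _; rewrite -big_split; apply: eq_bigr => k _; rewrite -big_split.
rewrite big_split /=; apply: lerD; rewrite le_eqVlt; apply/orP; left; apply/eqP.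
- apply: eq_bigr => i _; rewrite exchange_big /=; apply: eq_bigr => j _.
  by rewrite -mulr_suml Rt1.
- rewrite exchange_big /=.
  rewrite (eq_bigr (fun k => \sum_(j < n.+1) \sum_(i < m.+1) t i j k * D j k)); last first.
    by move=> k _; rewrite exchange_big.
  rewrite exchange_big /=; apply: eq_bigr => j _; apply: eq_bigr => k _.
  by rewrite -mulr_suml Rt2.
Qed.

Lemma D_tri_ind N a b c : (a + b + c < N)%N -> D a c <= D a b + D b c.
Proof.
elim: N a b c => [|N IH] a b c // Habc.
case: a Habc => [|m]; case: c => [|p]; case: b => [|n] Habc;
  rewrite ?D00 ?D0S ?DS0 ?add0r ?addr0 ?lexx ?addr_ge0 ?D_ge0 //.
- by rewrite lerDl D_ge0.
- by rewrite lerDr D_ge0.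
- by apply: (le_trans (D_le1 _ _)); rewrite lerDl ler01.
have Hg : forall (z1 : 'M[R]_(m.+1, n.+1)) (z2 : 'M[R]_(n.+1, p.+1)),
    transport_plan pi z1 -> transport_plan pi z2 -> D m.+1 p.+1 <= cost z1 + cost z2.
  move=> z1 z2 H1 H2; apply: glue_cost => // i j k; apply: IH.
  by have := ltn_ord i; have := ltn_ord j; have := ltn_ord k; lia.
rewrite -lerBlDl; apply: D_ge_lb => z2 H2.
rewrite lerBlDl -lerBlDr; apply: D_ge_lb => z1 H1.
by rewrite lerBlDr; apply: Hg.
Qed.

Lemma D_tri a b c : D a c <= D a b + D b c.
Proof. exact: (@D_tri_ind (a + b + c).+1). Qed.
End S.

Lemma absz_inj (x y : int) : -1 <= x -> -1 <= y -> absz (x + 1) = absz (y + 1) -> x = y.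
Proof.
move=> Hx Hy E.
have Ex : (absz (x + 1))%:Z = x + 1 by rewrite abszE ger0_norm //; lia.
have Ey : (absz (y + 1))%:Z = y + 1 by rewrite abszE ger0_norm //; lia.
have : x + 1 = y + 1 by rewrite -Ex -Ey E.
by move/addIr.
Qed.

Theorem theorem2 (R : realType) (pi : nat -> nat -> R) :
  is_prob_seq pi ->
  (forall x y : int, -1 <= x -> -1 <= y -> 0 <= dist pi x y) /\
  (forall x y : int, -1 <= x -> -1 <= y -> (dist pi x y = 0 <-> x = y)) /\
  (forall x y : int, -1 <= x -> -1 <= y -> dist pi x y = dist pi y x) /\
  (forall x y z : int, -1 <= x -> -1 <= y -> -1 <= z ->
     dist pi x z <= dist pi x y + dist pi y z).
Proof.
move=> Hpi.
have dE : forall x y, dist pi x y = D pi (absz (x + 1)) (absz (y + 1)) by [].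
split; [|split; [|split]].
- by move=> x y _ _; rewrite dE; apply: D_ge0.
- move=> x y Hx Hy; rewrite dE; split.
  + by move/(D_eq0 Hpi); apply: absz_inj.
  + by move=> ->; apply: D_diag.
- by move=> x y _ _; rewrite !dE; apply: D_sym.
- by move=> x y z _ _ _; rewrite !dE; apply: D_tri.
Qed.
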